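(* Let $Y$ be a Young diagram with row lengths $a_1\ge\cdots\ge a_m\ge0$ and size $|Y|=\sum_i a_i$. If $\tau^{(2)}(H(Y))=|Y|$, then $Y$ is wide.
   Context: A Young diagram with row lengths $a_1\ge\cdots\ge a_m\ge 0$ represents the partition $|Y|=a_1+\cdots+a_m$. Its conjugate $Y'$ has row lengths $b_j=|\{i:a_i\ge j\}|$. A diagram $X$ dominates a diagram $Z$ of the same size if $\sum_{i=1}^k a_i(X)\ge \sum_{i=1}^k a_i(Z)$ for all $k\ge1$ (padding with zeros). $Y$ is wide if for every subset of its rows, the diagram $Z$ formed by those rows dominates $Z'$. The hypergraph $H(Y)$ has vertex sides $R=\{r_1,\dots,r_m\}$, $C=\{c_1,\dots,c_{a_1}\}$, $S=\{s_1,\dots,s_{a_1}\}$ and edges $\{r_i,c_j,s_k\}$ for all $1\le i\le m$, $1\le j,k\le a_i$. A 2-cover of a hypergraph $H$ is a set $P$ of 2-element vertex sets, each contained in some edge, such that every edge of $H$ contains a member of $P$; $\tau^{(2)}(H)$ is the minimum size of a 2-cover. *)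

(* Defs.v *)
From mathcomp Require Import all_boot.
Set Implicit Arguments. Unset Strict Implicit. Unset Printing Implicit Defensive.

Definition young (a : seq nat) : Prop := sorted geq a.

Definition ysize (a : seq nat) : nat := sumn a.

Definition a1 (a : seq nat) : nat := foldr maxn 0 a.

Definition conj (a : seq nat) : seq nat :=
  [seq count (fun x => j <= x) a | j <- iota 1 (a1 a)].

(* X dominates Z (same size; partial sums compared, padding with zeros) *)
Definition dominates (X Z : seq nat) : Prop :=
  sumn X = sumn Z /\ forall k, 1 <= k -> sumn (take k Z) <= sumn (take k X).

(* Y is wide: for every subset of rows, the diagram Z formed by them dominates Z'.
   A subset of rows (kept in order) is a subsequence of the row sequence. *)
Definition wide (a : seq nat) : Prop :=
  forall z, subseq z a -> dominates z (conj z).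

Definition two_cover (V : finType) (E P : {set {set V}}) : bool :=
  [forall p in P, (#|p| == 2) && [exists e in E, p \subset e]] &&
  [forall e in E, [exists p in P, p \subset e]].

(* tau^(2)(H): minimum size of a 2-cover (the default value #|{set V}| is
   an upper bound on the size of any 2-cover, so it never affects the min
   once a 2-cover exists). *)
Definition tau2 (V : finType) (E : {set {set V}}) : nat :=
  \big[minn/#|{: {set V}}|]_(P : {set {set V}} | two_cover E P) #|P|.

(* Vertices of H(Y): R = 'I_m, C = 'I_(a_1), S = 'I_(a_1) (0-indexed). *)
Definition HV (a : seq nat) : finType :=
  ('I_(size a) + ('I_(a1 a) + 'I_(a1 a)))%type.

(* Edges {r_i, c_j, s_k} for all i and all j, k <= a_i (0-indexed: j, k < a_i). *)
Definition HY (a : seq nat) : {set {set HV a}} :=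
  [set [set (inl t.1 : HV a); inr (inl t.2.1); inr (inr t.2.2)]
     | t in [set t : 'I_(size a) * ('I_(a1 a) * 'I_(a1 a))
              | (t.2.1 < nth 0 a t.1) && (t.2.2 < nth 0 a t.1)]].

(* Main.v *)
Require Import Defs.
From mathcomp Require Import all_boot zify.
Set Implicit Arguments. Unset Strict Implicit.

Lemma geq_transitive : transitive geq.
Proof. move=> x y z /= H1 H2; lia. Qed.

Lemma le_a1 z x : x \in z -> x <= a1 z.
Proof.
elim: z => [|y z IH] //=; rewrite inE /a1 /= => /orP [/eqP->|/IH H].
  by apply: leq_maxl.
by apply: leq_trans H (leq_maxr _ _).
Qed.

Lemma count_iota_le x m : count (fun j => j <= x) (iota 1 m) = minn x m.
Proof.
elim: m => [|m IH]; first by rewrite minn0.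
rewrite -[m.+1]addn1 iotaD count_cat IH /= addn0.
case: leqP => H; lia.
Qed.

Lemma sumn_map_add (T : Type) (f g : T -> nat) s :
  sumn [seq f x + g x | x <- s] = sumn (map f s) + sumn (map g s).
Proof. elim: s => //= x s ->; lia. Qed.

Lemma sumn_count_swap (s z : seq nat) :
  sumn [seq count (fun x => j <= x) z | j <- s] =
  sumn [seq count (fun j => j <= x) s | x <- z].
Proof.
elim: z => [|x z IH] /=; first by elim: s => //.
rewrite sumn_map_add IH; congr (_ + _).
by clear IH; elim: s => //= j s ->.
Qed.

Lemma take_conj k z :
  sumn (take k (conj z)) = sumn [seq minn x k | x <- z].
Proof.
rewrite /conj -map_take take_iota sumn_count_swap.
congr sumn; apply/eq_in_map => x /le_a1 H.
rewrite count_iota_le; lia.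
Qed.

Lemma sumn_conj z : sumn (conj z) = sumn z.
Proof.
have -> : conj z = take (a1 z) (conj z) by rewrite take_oversize // size_map size_iota.
rewrite take_conj; congr sumn.
rewrite -[RHS]map_id; apply/eq_in_map => x /le_a1 H; lia.
Qed.

Lemma drop_le z k : sorted geq z -> all (fun x => x <= nth 0 z k) (drop k z).
Proof.
elim: z k => [|x z IH] [|k] //= Hs.
  rewrite leqnn /=. have := order_path_min geq_transitive Hs.
  by apply: sub_all => y /=.
exact: IH (path_sorted Hs).
Qed.

Lemma take_ge z k : sorted geq z -> k < size z -> all (fun x => nth 0 z k <= x) (take k z).
Proof.
elim: z k => [|x z IH] [|k] //= Hs Hk.
have Hall := order_path_min geq_transitive Hs.
rewrite IH ?(path_sorted Hs) // andbT.
by move/allP: Hall => /(_ _ (mem_nth 0 Hk)).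
Qed.

Lemma sum_sub_ge L s : all (fun x => L <= x) s ->
  sumn [seq x - L | x <- s] + size s * L = sumn s.
Proof. elim: s => //= x s IH /andP [H1 H2]; rewrite -IH //; lia. Qed.

Lemma sum_sub_le L s : all (fun x => x <= L) s -> sumn [seq x - L | x <- s] = 0.
Proof. elim: s => //= x s IH /andP [H1 H2]; rewrite IH //; lia. Qed.

Lemma key_top z k : sorted geq z ->
  k * nth 0 z k + sumn [seq x - nth 0 z k | x <- z] <= sumn (take k z).
Proof.
move=> Hs; case: (ltnP k (size z)) => Hk.
  rewrite -{3}(cat_take_drop k z) map_cat sumn_cat (sum_sub_le (@drop_le z k Hs)).
  rewrite -(sum_sub_ge (take_ge Hs Hk)) size_take Hk; lia.
rewrite nth_default // take_oversize //.
rewrite (eq_map (g := id)); first by rewrite map_id muln0.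
move=> x /=; lia.
Qed.

Lemma sum_mask (f : nat -> nat) (a : seq nat) m : size m = size a ->
  sumn (map f (mask m a)) = \sum_(i < size a | nth false m i) f (nth 0 a i).
Proof.
elim: a m => [|x a IH] [|b m] //= Hsz; first by rewrite big_ord0.
rewrite big_mkcond big_ord_recl /= -big_mkcond.
case: b => /=; rewrite IH //; by case: Hsz.
Qed.

Lemma bigmin_le_seq (I : eqType) (s : seq I) (P : pred I) (F : I -> nat) N i0 :
  i0 \in s -> P i0 -> \big[minn/N]_(i <- s | P i) F i <= F i0.
Proof.
elim: s => // x s IH; rewrite inE big_cons => /orP [/eqP <- | Hs] HP.
  by rewrite HP geq_minl.
case: (P x); [exact: leq_trans (geq_minr _ _) (IH Hs HP) | exact: IH].
Qed.

Lemma tau2_le (V : finType) (E P : {set {set V}}) : two_cover E P -> tau2 E <= #|P|.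
Proof. move=> H; exact: (bigmin_le_seq _ _ (mem_index_enum P) H). Qed.

Lemma count_ord n lo hi : \sum_(j < n) ((lo <= j) && (j < hi) : nat) <= hi - lo.
Proof.
rewrite -(big_mkord xpredT (fun j => ((lo <= j) && (j < hi) : nat))).
suff : \sum_(0 <= j < n) ((lo <= j) && (j < hi) : nat) <= minn hi n - lo by lia.
elim: n => [|n IH]; first by rewrite big_geq.
rewrite big_nat_recr //=.
case: (leqP lo n) => H1; case: (ltnP n hi) => H2 /=; lia.
Qed.

Lemma card_pairs (I : finType) n (lo hi : I -> nat) :
  #|[set t : I * 'I_n | (lo t.1 <= t.2) && (t.2 < hi t.1)]| <= \sum_i (hi i - lo i).
Proof.
have -> : #|[set t : I * 'I_n | (lo t.1 <= t.2) && (t.2 < hi t.1)]| =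
   \sum_(p : I * 'I_n) ((lo p.1 <= p.2) && (p.2 < hi p.1) : nat).
  by rewrite -sum1_card big_mkcond; apply: eq_bigr => p _; rewrite inE; case: ifP.
rewrite -(pair_bigA _ (fun i (j : 'I_n) => ((lo i <= j) && (j < hi i) : nat))) /=.
apply: leq_sum => i _; exact: count_ord.
Qed.

Lemma core (a : seq nat) m k : young a -> size m = size a ->
  sumn (take k (mask m a)) < sumn (take k (conj (mask m a))) ->
  tau2 (HY a) < ysize a.
Proof.
move=> Hy Hsz Hk.
set z := mask m a in Hk.
have Hz : sorted geq z by exact: (subseq_sorted geq_transitive (mask_subseq m a) Hy).
set sel := fun i : 'I_(size a) => nth false m i.
set L := nth 0 z k.
set A := fun i : 'I_(size a) => nth 0 a i.
have HA : forall i, A i <= a1 a by move=> i; apply: le_a1; apply: mem_nth.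
set lo1 := fun i => if sel i then k else 0.
set lo2 := fun i => if sel i then L else A i.
set P1 := [set [set (inl t.1 : HV a); inr (inl t.2)] | t in [set t : 'I_(size a) * 'I_(a1 a) | (lo1 t.1 <= t.2) && (t.2 < A t.1)]].
set P2 := [set [set (inl t.1 : HV a); inr (inr t.2)] | t in [set t : 'I_(size a) * 'I_(a1 a) | (lo2 t.1 <= t.2) && (t.2 < A t.1)]].
set P3 := [set [set (inr (inl t.1) : HV a); inr (inr t.2)] | t in [set t : 'I_(a1 a) * 'I_(a1 a) | [&& t.1 < k, t.2 < L & [exists i : 'I_(size a), (t.1 < A i) && (t.2 < A i)]]]].
have Hcov : two_cover (HY a) (P1 :|: P2 :|: P3).
  apply/andP; split.
    apply/forall_inP => p; rewrite !inE => /orP [/orP [Hp|Hp]|Hp].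
    - case/imsetP: Hp => [[i j]]; rewrite inE /= => /andP [_ Hj] ->.
      rewrite cards2 /=; apply/existsP; exists [set (inl i : HV a); inr (inl j); inr (inr j)].
      apply/andP; split.
        by apply/imsetP; exists (i, (j, j)); rewrite // inE /= Hj.
      by apply/subsetP => x; rewrite !inE => /orP [] ->; rewrite ?orbT.
    - case/imsetP: Hp => [[i j]]; rewrite inE /= => /andP [_ Hj] ->.
      rewrite cards2 /=; apply/existsP; exists [set (inl i : HV a); inr (inl j); inr (inr j)].
      apply/andP; split.
        by apply/imsetP; exists (i, (j, j)); rewrite // inE /= Hj.
      by apply/subsetP => x; rewrite !inE => /orP [] ->; rewrite ?orbT.
    - case/imsetP: Hp => [[j l]]; rewrite inE /= => /and3P [_ _ /existsP [i /andP [Hj Hl]]] ->.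
      rewrite cards2 /=; apply/existsP; exists [set (inl i : HV a); inr (inl j); inr (inr l)].
      apply/andP; split.
        by apply/imsetP; exists (i, (j, l)); rewrite // inE /= Hj.
      by apply/subsetP => x; rewrite !inE => /orP [] ->; rewrite ?orbT.
  apply/forall_inP => e /imsetP [[i [j l]]]; rewrite inE /= => /andP [Hj Hl] ->.
  case H1 : (lo1 i <= j).
    apply/existsP; exists [set (inl i : HV a); inr (inl j)].
    rewrite !inE; apply/andP; split.
      by apply/orP; left; apply/orP; left; apply/imsetP; exists (i, j); rewrite // inE /= H1.
    by apply/subsetP => x; rewrite !inE => /orP [] ->; rewrite ?orbT.
  have [Hs Hjk] : sel i /\ j < k.
    by move: H1; rewrite /lo1; case: (sel i) => //; rewrite ltnNge => ->.
  case H2 : (L <= l).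
    apply/existsP; exists [set (inl i : HV a); inr (inr l)].
    rewrite !inE; apply/andP; split.
      by apply/orP; left; apply/orP; right; apply/imsetP; exists (i, l); rewrite // inE /= /lo2 Hs H2.
    by apply/subsetP => x; rewrite !inE => /orP [] ->; rewrite ?orbT.
  apply/existsP; exists [set (inr (inl j) : HV a); inr (inr l)].
  rewrite !inE; apply/andP; split.
    apply/orP; right; apply/imsetP; exists (j, l); rewrite // inE /= Hjk ltnNge H2 /=.
    by apply/existsP; exists i; rewrite Hj Hl.
  by apply/subsetP => x; rewrite !inE => /orP [] ->; rewrite ?orbT.
have Hcard : #|P1 :|: P2 :|: P3| <= \sum_i (A i - lo1 i) + \sum_i (A i - lo2 i) + k * L.
  have H1 : #|P1| <= \sum_i (A i - lo1 i).
    apply: leq_trans (leq_imset_card _ _) _. apply: card_pairs.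
  have H2 : #|P2| <= \sum_i (A i - lo2 i).
    apply: leq_trans (leq_imset_card _ _) _; apply: card_pairs.
  have H3 : #|P3| <= k * L.
    apply: leq_trans (leq_imset_card _ _) _.
    apply: leq_trans (subset_leq_card (_ : _ \subset [set t : 'I_(a1 a) * 'I_(a1 a) |
        ((fun _ => 0) t.1 <= t.2) && (t.2 < (fun i : 'I_(a1 a) => if i < k then L else 0) t.1)])) _.
      apply/subsetP => t; rewrite !inE /= => /and3P [-> -> _] //.
    apply: leq_trans (@card_pairs _ (a1 a) (fun _ => 0) (fun i : 'I_(a1 a) => if i < k then L else 0)) _.
    rewrite (eq_bigr (fun i : 'I_(a1 a) => ((0 <= i) && (i < k) : nat) * L)); last first.
      by move=> i _; rewrite subn0; case: (i < k); rewrite /= ?mul1n ?mul0n.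
    by rewrite -big_distrl /= leq_mul2r; move: (count_ord (a1 a) 0 k); rewrite subn0 => ->; rewrite orbT.
  rewrite cardsU cardsU; lia.
have Ha : k * L + \sum_(i | sel i) (A i - L) <= sumn (take k z).
  by rewrite -(sum_mask (fun x => x - L)) //; apply: key_top.
have Hb : sumn (take k z) < \sum_(i | sel i) minn (A i) k.
  by rewrite -(sum_mask (fun x => minn x k)) // -take_conj.
have Hy' : ysize a = \sum_i A i.
  rewrite /ysize -{1}(mask_true (leqnn (size a))) -[sumn _](congr1 sumn (map_id _)).
  rewrite (sum_mask id) ?size_nseq //; apply: eq_bigl => i; by rewrite nth_nseq ltn_ord.
have Hpt : \sum_i (A i - lo1 i) + \sum_i (A i - lo2 i) + \sum_(i | sel i) minn (A i) k
   <= \sum_i A i + \sum_(i | sel i) (A i - L).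
  rewrite !(big_mkcond sel) -!big_split /=; apply: leq_sum => i _.
  rewrite /lo1 /lo2; case: (sel i); lia.
have := tau2_le Hcov; rewrite Hy'. move: Hcard Ha Hb Hpt. clear. clearbody P1 P2 P3 lo1 lo2 A L sel z. move: (k * L) (\sum_i A i) (\sum_i (A i - lo1 i)) (\sum_i (A i - lo2 i)) (\sum_(i | sel i) (A i - L)) (\sum_(i | sel i) minn (A i) k) (sumn (take k z)) (tau2 (HY a)) (#|P1 :|: P2 :|: P3|). lia.
Qed.

Theorem theorem3 (a : seq nat) :
  young a -> tau2 (HY a) = ysize a -> wide a.
Proof.
move=> Hy Htau z /subseqP [m Hsz Hz]; subst z.
split; first by rewrite sumn_conj.
move=> k _; rewrite leqNgt; apply/negP => Hk.
have := core Hy Hsz Hk; by rewrite Htau ltnn.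
Qed.
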